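(* Assume $\delta>d$. Then for every $(z,w)\in A_p\times\mathbb{C}$, $$\limsup_{n\to\infty}\frac{1}{\delta^n}\log^+|Q_z^n(w)|\;\le\;\alpha\, G_p(z).$$
   Context: Let $p(z)=z^\delta+O(z^{\delta-1})$ be a monic polynomial of degree $\delta\ge 2$, and let $q(z,w)=b(z)w^d+(\text{terms of lower degree in } w)$ be a polynomial with $d=\deg_w q\ge 2$, where $b$ is a monic polynomial of degree $\gamma\ge 0$. Let $f(z,w)=(p(z),q(z,w))$ (a polynomial skew product). Write $q_z(w)=q(z,w)$ and $Q_z^n=q_{p^{n-1}(z)}\circ\cdots\circ q_{p(z)}\circ q_z$, so that $f^n(z,w)=(p^n(z),Q_z^n(w))$. Let $A_p=\{z\in\mathbb{C}: p^n(z)\to\infty\}$ and $G_p(z)=\lim_{n\to\infty}\delta^{-n}\log^+|p^n(z)|$ (the Green function of $p$). For $\delta>d$, define the rational number $$\alpha=\max\Big\{\frac{n_j}{\delta-m_j}\;:\; z^{n_j}w^{m_j}\text{ is a monomial appearing in } q \text{ with nonzero coefficient}\Big\}\ \ (\ge 0).$$ *)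

(* Defs.v *)
From Stdlib Require Import Reals List.
Open Scope R_scope.

Definition Cx : Type := (R * R)%type.
Definition Czero : Cx := (0, 0).
Definition Cone : Cx := (1, 0).
Definition Cadd (a b : Cx) : Cx := (fst a + fst b, snd a + snd b).
Definition Cmul (a b : Cx) : Cx :=
  (fst a * fst b - snd a * snd b, fst a * snd b + snd a * fst b).
Fixpoint Cpow (a : Cx) (n : nat) : Cx :=
  match n with O => Cone | S k => Cmul a (Cpow a k) end.
Definition Cnorm (a : Cx) : R := sqrt (fst a * fst a + snd a * snd a).

Fixpoint Csum (f : nat -> Cx) (n : nat) : Cx :=
  match n with O => f O | S k => Cadd (Csum f k) (f (S k)) end.

(* one-variable polynomial given by its coefficient list (constant term first) *)
Definition peval (l : list Cx) (z : Cx) : Cx :=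
  fold_right (fun a acc => Cadd a (Cmul z acc)) Czero l.

Definition monic_of_degree (l : list Cx) (delta : nat) : Prop :=
  length l = S delta /\ nth delta l Czero = Cone.

Definition qeval (c : nat -> nat -> Cx) (N d : nat) (z w : Cx) : Cx :=
  Csum (fun i => Csum (fun j => Cmul (c i j) (Cmul (Cpow z i) (Cpow w j))) d) N.

Fixpoint piter (pl : list Cx) (n : nat) (z : Cx) : Cx :=
  match n with O => z | S k => peval pl (piter pl k z) end.

(* Q_z^n(w) = q_{p^{n-1}(z)} o ... o q_z (w) *)
Fixpoint Qiter (pl : list Cx) (c : nat -> nat -> Cx) (N d : nat) (n : nat) (z w : Cx) : Cx :=
  match n with
  | O => w
  | S k => qeval c N d (piter pl k z) (Qiter pl c N d k z w)
  end.

Definition logplus (x : R) : R := Rmax 0 (ln x).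

Definition in_escape_set (pl : list Cx) (z : Cx) : Prop :=
  cv_infty (fun n => Cnorm (piter pl n z)).

Definition is_alpha (c : nat -> nat -> Cx) (delta : nat) (alpha : R) : Prop :=
  (forall i j, c i j <> Czero -> INR i / INR (delta - j) <= alpha) /\
  (exists i j, c i j <> Czero /\ alpha = INR i / INR (delta - j)).

Definition limsup_le (u : nat -> R) (L : R) : Prop :=
  forall eps, eps > 0 -> exists N0, forall n, (N0 <= n)%nat -> u n <= L + eps.

(* Main.v *)
Require Import Defs.
From Stdlib Require Import Reals List Lra Lia.
From Coquelicot Require Import Coquelicot.
Open Scope R_scope.

Lemma ln_le' x y : 0 < x -> x <= y -> ln x <= ln y.
Proof.
  intros Hx Hxy. destruct (Rle_lt_or_eq_dec _ _ Hxy) as [H|H].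
  - left. apply ln_increasing; auto.
  - subst; lra.
Qed.

Lemma exp_le' x y : x <= y -> exp x <= exp y.
Proof.
  intros Hxy. destruct (Rle_lt_or_eq_dec _ _ Hxy) as [H|H].
  - left. apply exp_increasing; auto.
  - subst; lra.
Qed.

Lemma exp_INR_mul (i : nat) L : exp (INR i * L) = exp L ^ i.
Proof.
  induction i as [|i IH].
  - simpl. rewrite Rmult_0_l, exp_0. reflexivity.
  - rewrite S_INR. simpl (exp L ^ S i). rewrite Rmult_plus_distr_r, Rmult_1_l, exp_plus, IH. ring.
Qed.

Lemma Cnorm_Cmod a : Cnorm a = Cmod a.
Proof. unfold Cnorm, Cmod. f_equal. simpl. ring. Qed.

Lemma Cnorm_ge0 a : 0 <= Cnorm a.
Proof. rewrite Cnorm_Cmod. apply Cmod_ge_0. Qed.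

Lemma Cnorm_add a b : Cnorm (Cadd a b) <= Cnorm a + Cnorm b.
Proof. rewrite !Cnorm_Cmod. exact (Cmod_triangle a b). Qed.

Lemma Cnorm_mul a b : Cnorm (Cmul a b) = Cnorm a * Cnorm b.
Proof. rewrite !Cnorm_Cmod. exact (Cmod_mult a b). Qed.

Lemma Cnorm_pow a n : Cnorm (Cpow a n) = Cnorm a ^ n.
Proof.
  induction n as [|n IH]; simpl.
  - unfold Cnorm, Cone; simpl. replace (1*1+0*0) with 1 by ring. apply sqrt_1.
  - rewrite Cnorm_mul, IH. reflexivity.
Qed.

Lemma Csum_bound f n : Cnorm (Csum f n) <= sum_f_R0 (fun k => Cnorm (f k)) n.
Proof.
  induction n as [|n IH]; simpl.
  - lra.
  - eapply Rle_trans; [apply Cnorm_add|]. lra.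
Qed.

Lemma le_exp_logplus x : 0 <= x -> x <= exp (logplus x).
Proof.
  intros Hx. unfold logplus. destruct (Rlt_dec 0 x) as [H|H].
  - rewrite <- (exp_ln x) at 1 by exact H. apply exp_le'. apply Rmax_r.
  - pose proof (exp_pos (Rmax 0 (ln x))). lra.
Qed.

Lemma logplus_ge0 x : 0 <= logplus x.
Proof. unfold logplus. apply Rmax_l. Qed.

Lemma logplus_le y Y : y <= Y -> 1 <= Y -> logplus y <= ln Y.
Proof.
  intros Hy HY. unfold logplus. apply Rmax_lub.
  - rewrite <- ln_1. apply ln_le'; lra.
  - destruct (Rlt_dec 0 y) as [H|H].
    + apply ln_le'; lra.
    + unfold ln at 1. destruct (Rlt_dec 0 y); [contradiction|].
      rewrite <- ln_1. apply ln_le'; lra.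
Qed.

Lemma q_bound c N d z w T :
  0 <= T ->
  (forall i j, c i j <> Czero ->
     INR i * logplus (Cnorm z) + INR j * logplus (Cnorm w) <= T) ->
  logplus (Cnorm (qeval c N d z w)) <=
  ln (1 + sum_f_R0 (fun i => sum_f_R0 (fun j => Cnorm (c i j)) d) N) + T.
Proof.
  intros HT Hc.
  set (S := sum_f_R0 (fun i => sum_f_R0 (fun j => Cnorm (c i j)) d) N).
  assert (HS : 0 <= S).
  { unfold S. apply cond_pos_sum. intro i. apply cond_pos_sum. intro j. apply Cnorm_ge0. }
  assert (Hterm : forall i j, Cnorm (Cmul (c i j) (Cmul (Cpow z i) (Cpow w j)))
                              <= Cnorm (c i j) * exp T).
  { intros i j. rewrite Cnorm_mul, Cnorm_mul, !Cnorm_pow.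
    destruct (Req_dec_T (Cnorm (c i j)) 0) as [H0|H0].
    - rewrite H0. pose proof (exp_pos T). lra.
    - assert (Hne : c i j <> Czero).
      { intro E. apply H0. rewrite E. unfold Cnorm, Czero; simpl.
        replace (0*0+0*0) with 0 by ring. apply sqrt_0. }
      apply Rmult_le_compat_l; [apply Cnorm_ge0|].
      specialize (Hc i j Hne).
      apply Rle_trans with (exp (INR i * logplus (Cnorm z)) * exp (INR j * logplus (Cnorm w))).
      + rewrite !exp_INR_mul. apply Rmult_le_compat.
        * apply pow_le, Cnorm_ge0.
        * apply pow_le, Cnorm_ge0.
        * apply pow_incr. split; [apply Cnorm_ge0|]. apply le_exp_logplus, Cnorm_ge0.
        * apply pow_incr. split; [apply Cnorm_ge0|]. apply le_exp_logplus, Cnorm_ge0.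
      + rewrite <- exp_plus. apply exp_le'. exact Hc. }
  assert (Hq : Cnorm (qeval c N d z w) <= S * exp T).
  { unfold qeval. eapply Rle_trans; [apply Csum_bound|].
    apply Rle_trans with (sum_f_R0 (fun i => sum_f_R0 (fun j => Cnorm (c i j) * exp T) d) N).
    - apply sum_Rle. intros i _. eapply Rle_trans; [apply Csum_bound|].
      apply sum_Rle. intros j _. apply Hterm.
    - right. unfold S. symmetry. rewrite (Rmult_comm _ (exp T)), scal_sum. apply sum_eq. intros i _.
      rewrite (Rmult_comm _ (exp T)), scal_sum. reflexivity. }
  assert (HE : 1 <= exp T) by (rewrite <- exp_0; apply exp_le'; lra).
  rewrite <- (ln_exp T). rewrite <- ln_mult by (pose proof (exp_pos T); lra).
  apply logplus_le; nra.
Qed.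

Lemma geom (m : nat -> R) rho tau N1 :
  0 <= rho -> rho < 1 -> 0 <= tau ->
  (forall n, (N1 <= n)%nat -> m (S n) <= rho * m n + tau) ->
  forall k, m (N1 + k)%nat <= rho ^ k * m N1 + tau / (1 - rho).
Proof.
  intros H0 H1 Ht Hs k. induction k as [|k IH].
  - rewrite Nat.add_0_r. simpl. assert (0 <= tau / (1 - rho)).
    { apply Rmult_le_pos; auto. left. apply Rinv_0_lt_compat. lra. }
    lra.
  - rewrite Nat.add_succ_r. eapply Rle_trans; [apply Hs; lia|].
    assert (E : rho * (tau / (1 - rho)) + tau = tau / (1 - rho)) by (field; lra).
    simpl. apply Rmult_le_compat_l with (r := rho) in IH; auto. nra.
Qed.

Lemma Rmax0_scale p x : 0 < p -> Rmax 0 (p * x) = p * Rmax 0 x.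
Proof.
  intros Hp. unfold Rmax. destruct (Rle_dec 0 (p * x)); destruct (Rle_dec 0 x); nra.
Qed.

Lemma seq_main (u g r : nat -> R) (rho alpha G : R) :
  0 <= rho -> rho < 1 -> 0 <= alpha -> Un_cv g G -> Un_cv r 0 ->
  (forall n, u (S n) <= r n + alpha * g n + rho * Rmax 0 (u n - alpha * g n)) ->
  limsup_le u (alpha * G).
Proof.
  intros Hr0 Hr1 Ha Hg Hrc Hrec eps Heps.
  set (eta := eps * (1 - rho) / (3 * (1 + 2 * alpha))).
  assert (Heta : 0 < eta).
  { unfold eta. apply Rdiv_lt_0_compat; [apply Rmult_lt_0_compat|]; lra. }
  assert (Heta2 : eta * (1 + 2 * alpha) = eps * (1 - rho) / 3) by (unfold eta; field; lra).
  destruct (Hg eta Heta) as [N1 HN1].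
  destruct (Hrc eta Heta) as [N2 HN2].
  set (M := Nat.max N1 N2).
  set (m := fun n => Rmax 0 (u n - alpha * g n)).
  set (tau := eta * (1 + 2 * alpha)).
  assert (Htau : 0 <= tau) by (unfold tau; nra).
  assert (Hstep : forall n, (M <= n)%nat -> m (S n) <= rho * m n + tau).
  { intros n Hn. unfold m.
    assert (Hrn : Rabs (r n - 0) < eta) by (apply HN2; lia).
    assert (Hgn : Rabs (g n - G) < eta) by (apply HN1; lia).
    assert (HgSn : Rabs (g (S n) - G) < eta) by (apply HN1; lia).
    apply Rabs_def2 in Hrn. apply Rabs_def2 in Hgn. apply Rabs_def2 in HgSn.
    pose proof (Rmax_l 0 (u n - alpha * g n)).
    apply Rmax_lub.
    - unfold tau. nra.
    - specialize (Hrec n). assert (alpha * (g n - g (S n)) <= alpha * (2 * eta)).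
      { apply Rmult_le_compat_l; lra. }
      unfold tau. nra. }
  pose proof (geom m rho tau M Hr0 Hr1 Htau Hstep) as Hgeo.
  set (mM := m M).
  assert (HmM : 0 <= mM) by (unfold mM, m; apply Rmax_l).
  set (y := eps / (3 * (mM + 1))).
  assert (Hy : 0 < y) by (unfold y; apply Rdiv_lt_0_compat; lra).
  assert (Hy2 : y * (mM + 1) = eps / 3) by (unfold y; field; lra).
  assert (Habs : Rabs rho < 1) by (rewrite Rabs_right; lra).
  destruct (pow_lt_1_zero rho Habs y Hy) as [N3 HN3].
  exists (M + N3)%nat. intros n Hn.
  replace n with (M + (n - M))%nat by lia.
  set (k := (n - M)%nat).
  assert (Hk : (k >= N3)%nat) by (unfold k; lia).
  specialize (HN3 k Hk). rewrite Rabs_right in HN3 by (apply Rle_ge, pow_le; lra).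
  specialize (Hgeo k). fold mM in Hgeo.
  assert (Hpm : rho ^ k * mM <= eps / 3).
  { assert (rho ^ k * mM <= y * mM) by (apply Rmult_le_compat_r; lra). nra. }
  assert (Htr : tau / (1 - rho) = eps / 3) by (unfold tau; rewrite Heta2; field; lra).
  assert (Hgk : Rabs (g (M + k)%nat - G) < eta) by (apply HN1; lia).
  apply Rabs_def2 in Hgk.
  assert (Hmk : u (M + k)%nat - alpha * g (M + k)%nat <= m (M + k)%nat) by (unfold m; apply Rmax_r).
  assert (alpha * (g (M+k)%nat - G) <= alpha * eta) by (apply Rmult_le_compat_l; lra).
  assert (alpha * eta <= eps / 3).
  { assert (alpha * eta <= eta * (1 + 2 * alpha)) by nra.
    rewrite Heta2 in H0. nra. }
  nra.
Qed.

Theorem proposition4p1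
  (delta : nat) (pl : list Cx)
  (c : nat -> nat -> Cx) (N d gamma : nat) (alpha : R)
  (Hdelta : (2 <= delta)%nat) (Hp : monic_of_degree pl delta)
  (Hd : (2 <= d)%nat)
  (Hsupp : forall i j, (N < i)%nat \/ (d < j)%nat -> c i j = Czero)
  (Hb_lead : c gamma d = Cone)
  (Hb_monic : forall i, (gamma < i)%nat -> c i d = Czero)
  (Hdd : (d < delta)%nat)
  (Halpha : is_alpha c delta alpha) :
  forall z w : Cx, in_escape_set pl z ->
  forall G : R, Un_cv (fun n => logplus (Cnorm (piter pl n z)) / INR delta ^ n) G ->
  limsup_le (fun n => logplus (Cnorm (Qiter pl c N d n z w)) / INR delta ^ n) (alpha * G).
Proof.
  intros z w _ G HG.
  set (D := INR delta).
  assert (HD : 0 < D) by (unfold D; apply lt_0_INR; lia).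
  assert (HdD : INR d < D) by (unfold D; apply lt_INR; lia).
  assert (Hd0 : 0 <= INR d) by apply pos_INR.
  assert (Ha0 : 0 <= alpha).
  { destruct Halpha as [Ha _]. specialize (Ha gamma d).
    assert (Hne : c gamma d <> Czero).
    { rewrite Hb_lead. unfold Cone, Czero. intro H. injection H. lra. }
    specialize (Ha Hne). eapply Rle_trans; [|exact Ha].
    apply Rmult_le_pos; [apply pos_INR|]. left. apply Rinv_0_lt_compat, lt_0_INR. lia. }
  set (K' := ln (1 + sum_f_R0 (fun i => sum_f_R0 (fun j => Cnorm (c i j)) d) N)).
  apply seq_main with (g := fun n => logplus (Cnorm (piter pl n z)) / D ^ n)
                      (r := fun n => K' / D ^ (S n)) (rho := INR d / D).
  - apply Rmult_le_pos; [lra|]. left. apply Rinv_0_lt_compat. lra.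
  - assert (INR d / D * D = INR d) by (field; lra). nra.
  - exact Ha0.
  - exact HG.
  - intros eps Heps.
    assert (Hx : Rabs (/ D) < 1).
    { rewrite Rabs_right by (left; apply Rinv_0_lt_compat; lra).
      assert (HD2 : 2 <= D) by (unfold D; replace 2 with (INR 2) by (simpl; ring); apply le_INR; lia).
      assert (/ D * D = 1) by (field; lra).
      assert (0 < / D) by (apply Rinv_0_lt_compat; lra). nra. }
    set (y := eps / (Rabs K' + 1)).
    assert (Hk0 : 0 <= Rabs K') by apply Rabs_pos.
    assert (Hy : 0 < y) by (unfold y; apply Rdiv_lt_0_compat; lra).
    assert (Hy2 : y * (Rabs K' + 1) = eps) by (unfold y; field; lra).
    destruct (pow_lt_1_zero (/ D) Hx y Hy) as [N0 HN0].
    exists N0. intros n Hn. unfold R_dist. rewrite Rminus_0_r.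
    unfold Rdiv. rewrite <- pow_inv, Rabs_mult.
    specialize (HN0 (S n) ltac:(lia)).
    pose proof (Rabs_pos ((/ D) ^ S n)). nra.
  - intros n. cbv beta.
    change (Qiter pl c N d (S n) z w) with (qeval c N d (piter pl n z) (Qiter pl c N d n z w)).
    set (A := logplus (Cnorm (Qiter pl c N d n z w))).
    set (B := logplus (Cnorm (piter pl n z))).
    assert (HA : 0 <= A) by apply logplus_ge0.
    assert (HB : 0 <= B) by apply logplus_ge0.
    assert (HDn : 0 < D ^ n) by (apply pow_lt; lra).
    assert (E : A / D ^ n - alpha * (B / D ^ n) = / D ^ n * (A - alpha * B)) by (field; lra).
    rewrite E, Rmax0_scale by (apply Rinv_0_lt_compat; lra).
    set (X := Rmax 0 (A - alpha * B)).
    assert (HX0 : 0 <= X) by apply Rmax_l.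
    assert (HXA : A - alpha * B <= X) by apply Rmax_r.
    assert (E2 : K' / D ^ S n + alpha * (B / D ^ n) + INR d / D * (/ D ^ n * X)
                 = (K' + (alpha * D * B + INR d * X)) / D ^ S n).
    { simpl. field. lra. }
    rewrite E2. unfold Rdiv. apply Rmult_le_compat_r.
    { left. apply Rinv_0_lt_compat, pow_lt. lra. }
    apply q_bound.
    + assert (0 <= alpha * D * B) by (apply Rmult_le_pos; [apply Rmult_le_pos|]; lra).
      assert (0 <= INR d * X) by (apply Rmult_le_pos; lra). lra.
    + intros i j Hne. fold B. fold A.
      assert (Hj : (j <= d)%nat).
      { destruct (Compare_dec.le_lt_dec j d) as [H|H]; auto. exfalso. apply Hne, Hsupp. right. exact H. }
      destruct Halpha as [Ha _]. specialize (Ha i j Hne).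
      rewrite minus_INR in Ha by lia. fold D in Ha.
      assert (Hj1 : INR j <= INR d) by (apply le_INR; exact Hj).
      assert (Hj0 : 0 <= INR j) by apply pos_INR.
      assert (Hi : INR i <= alpha * (D - INR j)).
      { replace (INR i) with (INR i / (D - INR j) * (D - INR j)) by (field; lra).
        apply Rmult_le_compat_r; lra. }
      assert (H1 : INR i * B <= alpha * (D - INR j) * B) by (apply Rmult_le_compat_r; lra).
      assert (H2 : INR j * (A - alpha * B) <= INR j * X) by (apply Rmult_le_compat_l; lra).
      assert (H3 : INR j * X <= INR d * X) by (apply Rmult_le_compat_r; lra).
      nra.
Qed.
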